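(* Let $(X,d,\preccurlyeq)$ be a preordered $s$-regular $b$-metric space, let $x_0\in X$, and let $\mathcal{F}=\{f_\alpha\}_{\alpha\in\mathcal{I}}$ ($\mathcal I$ nonempty) be a concordantly isotone family of self mappings of $X$ with $f_\alpha(x_0)\succcurlyeq x_0$ for all $\alpha\in\mathcal{I}$. Suppose that for every chain $C\in\mathcal{C}^*_1(x_0,\mathcal{F},\preccurlyeq)$ there exists $w\in X$ which is a common upper bound of the chains $f_\alpha(C)$, $\alpha\in\mathcal{I}$, and there exist $z\in X$ and $\beta\in\mathcal{I}$ such that for all $\alpha\in\mathcal{I}$ and all $i\in\mathbb{N}$, $f_\alpha(w)\succcurlyeq w\succcurlyeq f_\beta^i(z)$, and $d(f_\alpha^i(w),f_\beta^i(z))\to 0$ as $i\to\infty$ for all $\alpha\in\mathcal I$. Then the set $\mathrm{ComFix}(\mathcal{F})\cap O^*_X(x_0)$ is nonempty and contains a maximal element.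
   Context: A $b$-metric space with coefficient $s\ge 1$ is a nonempty set $X$ with $d:X\times X\to[0,\infty)$ such that for all $x,y,z$: $d(x,y)=0$ iff $x=y$; $d(x,y)=d(y,x)$; $d(x,y)\le s[d(x,z)+d(z,y)]$. A preorder is a reflexive transitive relation $\preccurlyeq$; $x\succcurlyeq y$ means $y\preccurlyeq x$; $x\prec y$ means $x\preccurlyeq y$ and $x\ne y$. A preordered $s$-regular $b$-metric space $(X,d,\preccurlyeq)$ is a $b$-metric space with coefficient $s$ with a preorder such that $x\preccurlyeq y\preccurlyeq z$ implies $\max\{d(x,y),d(y,z)\}\le s^2d(x,z)$. A chain is a subset any two elements of which are comparable. $f^i$ is the $i$-th iterate. A family $\mathcal{F}=\{f_\alpha\}_{\alpha\in\mathcal I}$ of self maps is concordantly isotone if for all $x,y\in X$, $x\prec y$ implies $f_\alpha(x)\preccurlyeq f_\beta(y)$ for all $\alpha,\beta\in\mathcal{I}$. $O^*_X(x_0)=\{x:x\succcurlyeq x_0\}$. $\mathcal{C}^*_1(\mathcal F,\preccurlyeq)$ is the set of chains $C\subset\bigcup_{\alpha}f_\alpha(X)$ such that $f_\alpha(x)\succcurlyeq x$ for all $x\in C,\alpha\in\mathcal I$, and for all $x,y\in C$, $x\prec y$ implies $f_\alpha(x)\preccurlyeq y$ for all $\alpha$. $\mathcal{C}^*_1(x_0,\mathcal F,\preccurlyeq)=\{C\in\mathcal C^*_1(\mathcal F,\preccurlyeq): C\subset O^*_X(x_0)\cap\bigcup_\alpha f_\alpha(O^*_X(x_0))\}$. $\mathrm{ComFix}(\mathcal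 F)=\{x: f_\alpha(x)=x\ \forall\alpha\}$. A common upper bound of the sets $f_\alpha(C)$ is $w$ with $f_\alpha(x)\preccurlyeq w$ for all $x\in C$, $\alpha\in\mathcal I$. A maximal element of $A$ is $w\in A$ with no $u\in A$ such that $w\prec u$. *)

(* Defs.v *)
From Stdlib Require Import Reals.
Open Scope R_scope.

Definition b_metric {X : Type} (d : X -> X -> R) (s : R) : Prop :=
  1 <= s /\
  (forall x y, 0 <= d x y) /\
  (forall x y, d x y = 0 <-> x = y) /\
  (forall x y, d x y = d y x) /\
  (forall x y z, d x y <= s * (d x z + d z y)).

Definition preorder_rel {X : Type} (le : X -> X -> Prop) : Prop :=
  (forall x, le x x) /\ (forall x y z, le x y -> le y z -> le x z).

Definition sprec {X : Type} (le : X -> X -> Prop) (x y : X) : Prop :=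
  le x y /\ x <> y.

Definition preordered_s_regular_b_metric {X : Type}
    (d : X -> X -> R) (s : R) (le : X -> X -> Prop) : Prop :=
  b_metric d s /\ preorder_rel le /\
  (forall x y z, le x y -> le y z -> Rmax (d x y) (d y z) <= s ^ 2 * d x z).

Definition is_chain {X : Type} (le : X -> X -> Prop) (C : X -> Prop) : Prop :=
  forall x y, C x -> C y -> le x y \/ le y x.

Definition concordantly_isotone {X I : Type} (le : X -> X -> Prop)
    (f : I -> X -> X) : Prop :=
  forall x y, sprec le x y -> forall a b, le (f a x) (f b y).

Definition Ostar {X : Type} (le : X -> X -> Prop) (x0 : X) : X -> Prop :=
  fun x => le x0 x.

Definition Cstar1 {X I : Type} (le : X -> X -> Prop) (f : I -> X -> X)
    (C : X -> Prop) : Prop :=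
  is_chain le C /\
  (forall x, C x -> exists a y, x = f a y) /\
  (forall x a, C x -> le x (f a x)) /\
  (forall x y, C x -> C y -> sprec le x y -> forall a, le (f a x) y).

Definition Cstar1_at {X I : Type} (le : X -> X -> Prop) (f : I -> X -> X)
    (x0 : X) (C : X -> Prop) : Prop :=
  Cstar1 le f C /\
  (forall x, C x -> Ostar le x0 x /\ exists a y, Ostar le x0 y /\ x = f a y).

Definition ComFix {X I : Type} (f : I -> X -> X) (x : X) : Prop :=
  forall a, f a x = x.

Definition common_upper_bound {X I : Type} (le : X -> X -> Prop)
    (f : I -> X -> X) (C : X -> Prop) (w : X) : Prop :=
  forall a x, C x -> le (f a x) w.

Definition maximal_in {X : Type} (le : X -> X -> Prop) (A : X -> Prop) (w : X)
  : Prop := A w /\ ~ (exists u, A u /\ sprec le w u).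

(* Main.v *)
Require Import Defs.
From Stdlib Require Import Reals Lra Lia Classical.
Open Scope R_scope.

Lemma fix_lemma (X I : Type) (d : X -> X -> R) (s : R)
    (le : X -> X -> Prop) (f : I -> X -> X) w z b :
  preordered_s_regular_b_metric d s le ->
  concordantly_isotone le f ->
  (forall a (i : nat), le w (f a w) /\ le (Nat.iter i (f b) z) w) ->
  (forall a, Un_cv (fun i : nat =>
                      d (Nat.iter i (f a) w) (Nat.iter i (f b) z)) 0) ->
  ComFix f w.
Proof.
intros [[Hs1 [Hpos [Hd0 [Hsym Htri]]]] [[Hrefl Htrans] Hreg]] Hiso Hw Hcv a.
set (g := f a).
assert (Hmono : forall k, le (Nat.iter k g w) (Nat.iter (S k) g w)).
{ induction k as [|k IH].
  - simpl. apply (Hw a 0%nat).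
  - destruct (classic (Nat.iter k g w = Nat.iter (S k) g w)) as [E|E].
    + change (le (g (Nat.iter k g w)) (g (Nat.iter (S k) g w))).
      rewrite <- E. apply Hrefl.
    + apply (Hiso _ _ (conj IH E) a a). }
assert (Hup : forall i, le (g w) (Nat.iter (S i) g w)).
{ induction i as [|i IH].
  - apply Hrefl.
  - eapply Htrans; [apply IH| apply Hmono]. }
destruct (classic (g w = w)) as [E|E]; [exact E|exfalso].
assert (He : 0 < d w (g w)).
{ destruct (Hpos w (g w)) as [h|h]; [exact h|].
  exfalso; apply E; symmetry; apply Hd0; auto. }
assert (Hs4 : 0 < s ^ 2 * s ^ 2) by (apply Rmult_lt_0_compat; apply pow_lt; lra).
destruct (Hcv a (d w (g w) / (s ^ 2 * s ^ 2))) as [N HN].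
{ apply Rdiv_lt_0_compat; lra. }
specialize (HN (S N) ltac:(lia)).
unfold Rdist in HN. rewrite Rminus_0_r in HN.
rewrite Rabs_pos_eq in HN by apply Hpos.
fold g in HN.
set (u := Nat.iter (S N) (f b) z) in *.
set (v := Nat.iter (S N) g w) in *.
assert (H1 : d w v <= s ^ 2 * d u v).
{ eapply Rle_trans; [|apply (Hreg u w v)]. apply Rmax_r. apply (Hw a (S N)).
  eapply Htrans; [apply (Hw a 0%nat)|apply Hup]. }
assert (H2 : d w (g w) <= s ^ 2 * d w v).
{ eapply Rle_trans; [|apply (Hreg w (g w) v)]. apply Rmax_l. apply (Hw a 0%nat). apply Hup. }
rewrite Hsym in HN.
apply (Rmult_lt_compat_l (s ^ 2 * s ^ 2)) in HN; [|lra].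
replace (s ^ 2 * s ^ 2 * (d w (g w) / (s ^ 2 * s ^ 2))) with (d w (g w)) in HN by (field; lra).
assert (0 <= s^2) by (apply pow_le; lra).
nra.
Qed.

From mathcomp Require boolp classical_sets.
Module ZZ.
From mathcomp Require Import all_boot boolp classical_sets.

Lemma zorn_gen (T : Type) (le : T -> T -> Prop) (P : T -> Prop) :
  (forall x, le x x) -> (forall x y z, le x y -> le y z -> le x z) ->
  (forall x y, le x y -> le y x -> x = y) ->
  (forall A : T -> Prop, (forall x, A x -> P x) ->
     (forall x y, A x -> A y -> le x y \/ le y x) ->
     exists t, P t /\ forall x, A x -> le x t) ->
  exists m, P m /\ forall u, P u -> le m u -> u = m.
Proof.
move=> Hr Ht Ha Hc.
pose S := {x : T | P x}.
pose Rl := fun a b : S => `[< le (proj1_sig a) (proj1_sig b) >].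
case: (@Zorn S Rl); last first.
- move=> t Ht'.
  case: t Ht' => t pt Ht'; exists t; split => // u pu ltu.
  have := Ht' (exist _ u pu); rewrite /Rl /=.
  move=> h; have := h (asboolT ltu). by case.
- rewrite /Rl; move=> A tA.
  have h1 : forall x, (fun x => exists p : P x, A (exist _ x p)) x -> P x by move=> x [p _].
  have h2 : forall x y, (fun x => exists p : P x, A (exist _ x p)) x -> (fun x => exists p : P x, A (exist _ x p)) y -> le x y \/ le y x.
    move=> x y [px Ax] [py Ay].
    by case: (tA _ _ Ax Ay) => /asboolP h; [left|right].
  case: (Hc _ h1 h2) => t [Pt Ut].
  exists (exist _ t Pt) => [[x px]] Ax; apply/asboolP; apply: Ut; by exists px.
- rewrite /Rl; move=> [x px] [y py] /asboolP h1 /asboolP h2.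
  have e : x = y by exact: Ha.
  subst y; congr exist; exact: Prop_irrelevance.
- rewrite /Rl; by move=> r s t /asboolP h1 /asboolP h2; apply/asboolP; exact: Ht h1 h2.
- by move=> t; rewrite /Rl; apply/asboolP.
Qed.
End ZZ.

Theorem theorem3p2 (X I : Type) (d : X -> X -> R) (s : R)
    (le : X -> X -> Prop) (x0 : X) (f : I -> X -> X) :
  preordered_s_regular_b_metric d s le ->
  inhabited I ->
  concordantly_isotone le f ->
  (forall a, le x0 (f a x0)) ->
  (forall C : X -> Prop, Cstar1_at le f x0 C ->
     exists w : X, common_upper_bound le f C w /\
       exists (z : X) (b : I),
         (forall a (i : nat), le w (f a w) /\ le (Nat.iter i (f b) z) w) /\
         (forall a, Un_cv (fun i : nat =>
                      d (Nat.iter i (f a) w) (Nat.iter i (f b) z)) 0)) ->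
  (exists x, ComFix f x /\ Ostar le x0 x) /\
  (exists w, maximal_in le (fun x => ComFix f x /\ Ostar le x0 x) w).
Proof.
intros Hsp [a0] Hiso Hx0 Hmain.
pose proof Hsp as [[Hs1 [Hpos [Hd0 [Hsym Htri]]]] [[Hrefl Htrans] Hreg]].
assert (Hanti : forall x y, le x y -> le y x -> x = y).
{ intros x y h1 h2. apply Hd0.
  pose proof (Hreg x y x h1 h2) as H.
  assert (d x x = 0) by (apply Hd0; reflexivity).
  pose proof (Rmax_l (d x y) (d y x)). pose proof (Hpos x y). nra. }
set (c := f a0 x0).
assert (HC : Cstar1_at le f x0 (fun x => x = c)).
{ split; [split; [|split; [|split]]|].
  - intros x y -> ->. left; apply Hrefl.
  - intros x ->. exists a0, x0. reflexivity.
  - intros x a ->. destruct (classic (x0 = c)) as [E|E].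
    + rewrite <- E. apply Hx0.
    + apply (Hiso x0 c (conj (Hx0 a0) E) a0 a).
  - intros x y -> -> [_ E]. exfalso; apply E; reflexivity.
  - intros x ->. split. apply Hx0. exists a0, x0. split; [apply Hrefl|reflexivity]. }
destruct (Hmain _ HC) as [w1 [Hub1 [z1 [b1 [Hw1 Hcv1]]]]].
assert (Hfix1 : ComFix f w1) by (eapply fix_lemma; eauto).
assert (Hex : ComFix f w1 /\ Ostar le x0 w1).
{ split; [exact Hfix1|]. unfold Ostar.
  apply (Htrans _ c). apply Hx0. apply (Htrans _ (f a0 c)).
  destruct (classic (x0 = c)) as [E|E].
  - rewrite <- E. apply Hx0.
  - apply (Hiso x0 c (conj (Hx0 a0) E) a0 a0).
  - apply Hub1. reflexivity. }
split; [exists w1; exact Hex|].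
destruct (ZZ.zorn_gen X le (fun x => ComFix f x /\ Ostar le x0 x) Hrefl Htrans Hanti)
  as [m [Pm Hm]].
- intros A HAP HAc.
  destruct (classic (exists x, A x)) as [[x1 Ax1]|NA].
  + assert (HCA : Cstar1_at le f x0 A).
    { split; [split; [exact HAc|split; [|split]]|].
      - intros x Ax. exists a0, x. symmetry. apply (proj1 (HAP x Ax)).
      - intros x a Ax. rewrite (proj1 (HAP x Ax)). apply Hrefl.
      - intros x y Ax Ay [h _] a. rewrite (proj1 (HAP x Ax)). exact h.
      - intros x Ax. split. apply (HAP x Ax). exists a0, x.
        split. apply (HAP x Ax). symmetry. apply (proj1 (HAP x Ax)). }
    destruct (Hmain _ HCA) as [w [Hub [z [b [Hw Hcv]]]]].
    assert (Hfix : ComFix f w) by (eapply fix_lemma; eauto).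
    assert (Hle : forall x, A x -> le x w).
    { intros x Ax. specialize (Hub a0 x Ax). rewrite (proj1 (HAP x Ax)) in Hub. exact Hub. }
    exists w. split; [split; [exact Hfix|]|exact Hle].
    apply (Htrans _ x1). apply (HAP x1 Ax1). apply Hle; exact Ax1.
  + exists w1. split; [exact Hex|]. intros x Ax. exfalso; apply NA; eauto.
- exists m. split; [exact Pm|]. intros [u [Pu [hu E]]]. apply E. symmetry. apply Hm; auto.
Qed.
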